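(* Let $p$, $F$, $K$, $G=\langle\sigma\rangle$, $J$, $J_1$, $\epsilon(F^\times)$ be as in the context. (a) If $\xi_p\notin N(K^\times)$, then $J_1=\epsilon(F^\times)$. (b) If $\xi_p\in N(K^\times)$, then there exist $\lambda,\delta\in K^\times$ with $N_{K/F}(\lambda)=\xi_p$ and $\sigma(\delta)/\delta=\lambda^p$, and for any such $\delta$ one has $J_1=\epsilon(F^\times)\oplus\langle[\delta]\rangle$ (internal direct sum of $\mathbb{F}_p$-spaces).
   Context: Let $p$ be a prime and $F$ a field of characteristic different from $p$ containing a primitive $p$th root of unity $\xi_p$ (for $p=2$, $\xi_2=-1$). Let $a\in F^\times\setminus F^{\times p}$ and $K=F(\sqrt[p]{a})$; $K^\times=K\setminus\{0\}$. Let $G=\mathrm{Gal}(K/F)=\langle\sigma\rangle$, where $\sigma(\sqrt[p]{a})/\sqrt[p]{a}=\xi_p$. Let $J=K^\times/K^{\times p}$ with elements $[\gamma]$, $J_1=J^G=\ker(\sigma-1)$ the $G$-fixed submodule, and $\epsilon(F^\times)=F^\times K^{\times p}/K^{\times p}\subseteq J$ the image of $F^\times$. $N(K^\times)$ denotes the norm group $N_{K/F}(K^\times)\subseteq F^\times$. *)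

(* Defs.v *)
From HB Require Import structures.
From mathcomp Require Import all_boot all_order all_algebra all_field.
Set Implicit Arguments. Unset Strict Implicit. Unset Printing Implicit Defensive.
Import GRing.Theory.
Local Open Scope ring_scope.

(* Setting: L is a field extension of F (K in the paper); elements of F are
   embedded in L as f%:A.  J = L^x / L^xp is described through representatives:
   classes are determined by the relation x ~ y iff x/y is a p-th power of a
   nonzero element. *)

Section Kummer.
Variables (F : fieldType) (L : fieldExtType F).

Definition isPthPow (p : nat) (x : L) := exists b : L, b != 0 /\ x = b ^+ p.

(* [gam] lies in J_1 = ker(sigma - 1) : sigma[gam] = [gam] in J *)
Definition inJ1 (p : nat) (sigma : L -> L) (gam : L) :=
  gam != 0 /\ isPthPow p (sigma gam / gam).

Definition inEps (p : nat) (gam : L) :=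
  gam != 0 /\ exists f : F, f != 0 /\ isPthPow p (gam / f%:A).

(* [gam] lies in eps(F^x) . <[delta]> (the subgroup generated by eps(F^x)
   and [delta]; J has exponent p so <[delta]> = {[delta^k] | k < p}) *)
Definition inEpsDelta (p : nat) (delta gam : L) :=
  gam != 0 /\ exists k : nat, (k < p)%N /\
    exists f : F, f != 0 /\ isPthPow p (gam / (f%:A * delta ^+ k)).
End Kummer.

(* Main.v *)
Require Import Defs.
From HB Require Import structures.
From mathcomp Require Import all_boot all_order all_algebra all_field.
From mathcomp Require Import all_fingroup all_solvable ring.
Import GRing.Theory.
Local Open Scope ring_scope.

Lemma gal_scal (F : fieldType) (K : splittingFieldType F) (E : {vspace K})
  (s : gal_of E) (f : F) : s (f%:A) = f%:A.
Proof. by rewrite /= -[f%:A]/(f *: 1) linearZ /= rmorph1. Qed.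

Lemma gal_iter (F : fieldType) (K : splittingFieldType F) (xi : F)
  (alpha : K) (sigma : gal_of (fullv : {vspace K})) :
  sigma alpha = xi%:A * alpha ->
  forall k, (sigma ^+ k)%g alpha = (xi ^+ k)%:A * alpha.
Proof.
move=> Hs; elim=> [|k IH]; first by rewrite expg0 gal_id expr0 scale1r mul1r.
rewrite expgSr galM ?memvf // IH rmorphM /= gal_scal Hs exprSr.
by rewrite !mulr_algl scalerA mulrC.
Qed.

Lemma root_unity (F : fieldType) (K : splittingFieldType F) (p : nat) (xi : F) (z : K) :
  p.-primitive_root xi -> z ^+ p = 1 -> exists i : 'I_p, z = (xi ^+ i)%:A.
Proof.
move=> Hxi Hz.
have H' : p.-primitive_root (in_alg K xi) by rewrite fmorph_primitive_root.
have [i ->] := prim_rootP H' Hz; exists i; exact: (esym (rmorphXn (in_alg K) i xi)).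
Qed.

Lemma setup (F : fieldType) (K : splittingFieldType F) (p : nat) (xi a : F)
    (alpha : K) (sigma : gal_of (fullv : {vspace K})) :
  prime p ->
  p.-primitive_root xi ->
  a != 0 ->
  alpha ^+ p = a%:A -> <<1; alpha>>%VS = fullv ->
  sigma alpha = xi%:A * alpha ->
  fixedField [set sigma] = 1%VS /\ #[sigma]%g = p.
Proof.
move=> pr Hxi Ha0 Hap Hgen Hs.
have Hp0 : (0 < p)%N by apply: prime_gt0.
have Hal0 : alpha != 0.
  apply/eqP=> E; move: Hap; rewrite E expr0n /= (gtn_eqF Hp0) => /esym/eqP.
  by rewrite scaler_eq0 (negbTE Ha0) oner_eq0.
have Hord : (p <= #[sigma]%g)%N.
  have := @gal_iter _ _ _ _ _ Hs #[sigma]%g; rewrite expg_order gal_id => /esym/eqP.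
  rewrite -subr_eq0 -{2}[alpha]mul1r -mulrBl mulf_eq0 (negbTE Hal0) orbF subr_eq0.
  move=> H1; have H2 : in_alg K (xi ^+ #[sigma]%g) = in_alg K 1 by rewrite rmorph1; apply/eqP.
  have /eqP := fmorph_inj (in_alg K) H2; rewrite -(prim_order_dvd Hxi).
  by move=> Hd; apply: dvdn_leq => //; apply: order_gt0.
have Hdim : (\dim (fullv : {vspace K}) <= p)%N.
  rewrite -Hgen dim_Fadjoin dimv1 muln1 -ltnS -(size_minPoly 1 alpha).
  have Hq : ('X^p - (a%:A)%:P : {poly K}) != 0.
    by rewrite -size_poly_eq0 (size_XnsubC (a%:A : K) Hp0).
  rewrite -(size_XnsubC (a%:A : K) Hp0); apply: dvdp_leq => //.
  apply: minPoly_dvdp.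
    by rewrite rpredB ?rpredX ?polyOverX // polyOverC // rpredZ ?mem1v.
  by rewrite /root !hornerE Hap subrr.
set M := fixedField [set sigma].
have HM : \dim_M (fullv : {vspace K}) = #[sigma]%g.
  rewrite galois_dim ?fixedField_galois //.
  by rewrite gal_generated.
have Hle : (\dim_M (fullv : {vspace K}) <= \dim (fullv : {vspace K}))%N by apply: leq_div.
have Ef : \dim (fullv : {vspace K}) = p by apply/eqP; rewrite eqn_leq Hdim; apply: leq_trans Hle; rewrite HM.
have Eo : #[sigma]%g = p by apply/eqP; rewrite eqn_leq Hord andbT -HM -Ef.
split=> //.
have dM : \dim M = 1%N.
  have Hdv : (\dim M %| \dim (fullv : {vspace K}))%N by apply: field_dimS; apply: subvf.
  have Hd0 : (0 < \dim M)%N by apply: adim_gt0.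
  move: HM; rewrite Eo Ef => HM.
  have := divnK Hdv; rewrite Ef HM => H.
  by apply/eqP; rewrite -(eqn_pmul2l Hp0) muln1 H.
apply/eqP; rewrite eq_sym eqEdim sub1v dimv1 dM //.
Qed.

Lemma facts (F : fieldType) (K : splittingFieldType F) (p : nat) (xi a : F)
    (alpha : K) (sigma : gal_of (fullv : {vspace K})) :
  prime p ->
  p.-primitive_root xi ->
  a != 0 ->
  alpha ^+ p = a%:A -> <<1; alpha>>%VS = fullv ->
  sigma alpha = xi%:A * alpha ->
  [/\ forall x : K, sigma x = x -> exists f : F, x = f%:A,
      forall x : K, galNorm 1 fullv (sigma x) = galNorm 1 fullv x,
      forall f : F, galNorm 1 fullv (f%:A : K) = (f ^+ p)%:A &
      forall b : K, b != 0 -> galNorm 1 fullv b = 1 ->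
         exists c : K, c != 0 /\ b = sigma c / c].
Proof.
move=> pr Hxi Ha0 Hap Hgen Hs.
have [HM Ho] := @setup _ _ _ _ _ _ _ pr Hxi Ha0 Hap Hgen Hs.
have HG : 'Gal((fullv : {vspace K}) / 1%VS)%g = <[sigma]>%g.
  by rewrite -HM gal_generated.
have Hsg : sigma \in 'Gal((fullv : {vspace K}) / 1%VS)%g by rewrite HG cycle_id.
split.
- move=> x Hx.
  have : x \in fixedField [set sigma].
    apply/fixedFieldP; first exact: memvf.
    by move=> y; rewrite inE => /eqP ->.
  by rewrite HM => /vlineP[k ->]; exists k.
- by move=> x; apply: galNorm_gal => //; apply: memvf.
- move=> f; rewrite /galNorm.
  under eq_bigr do rewrite gal_scal.
  rewrite prodr_const HG -[#|<[sigma]>%g|]/(#[sigma]%g) Ho.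
  exact: (esym (rmorphXn (in_alg K) p f)).
- move=> b Hb0 Hb1.
  have Hgen' : generator 'Gal((fullv : {vspace K}) / 1%VS)%g sigma by rewrite /generator HG.
  have /eqP := Hb1; move/(Hilbert's_theorem_90 Hgen' (memvf b)) => [c [_ Hc0] ->].
  exists c^-1; split; first by rewrite invr_eq0.
  rewrite fmorphV /=.
  have : sigma c != 0 by rewrite fmorph_eq0.
  move=> H; rewrite invrK mulrC; done.
Qed.


Lemma algA_neq0 (F : fieldType) (K : splittingFieldType F) (f : F) :
  f != 0 -> (f%:A : K) != 0.
Proof. by move=> hf; rewrite scaler_eq0 (negbTE hf) oner_eq0. Qed.

Lemma algA_inj (F : fieldType) (K : splittingFieldType F) (f g : F) :
  (f%:A : K) = g%:A -> f = g.
Proof.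
move=> H; have H2 : in_alg K f = in_alg K g by [].
exact: (fmorph_inj (in_alg K) H2).
Qed.

Lemma algA_X (F : fieldType) (K : splittingFieldType F) (f : F) n :
  ((f ^+ n)%:A : K) = (f%:A) ^+ n.
Proof. exact: (rmorphXn (in_alg K) n f). Qed.

Theorem lemma2 (F : fieldType) (K : splittingFieldType F) (p : nat) (xi a : F)
    (alpha : K) (sigma : gal_of (fullv : {vspace K})) :
  prime p ->
  (p%:R : F) != 0 ->
  p.-primitive_root xi ->
  a != 0 -> ~ (exists b : F, a = b ^+ p) ->
  alpha ^+ p = a%:A -> <<1; alpha>>%VS = fullv ->
  sigma alpha = xi%:A * alpha ->
  (* (a) *)
  (~ (exists x : K, x != 0 /\ galNorm 1 fullv x = xi%:A) ->
     forall gam : K, inJ1 p sigma gam <-> inEps p gam) /\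
  (* (b) *)
  ((exists x : K, x != 0 /\ galNorm 1 fullv x = xi%:A) ->
     (exists lam delta : K, lam != 0 /\ delta != 0 /\
        galNorm 1 fullv lam = xi%:A /\ sigma delta / delta = lam ^+ p) /\
     (forall lam delta : K, lam != 0 -> delta != 0 ->
        galNorm 1 fullv lam = xi%:A -> sigma delta / delta = lam ^+ p ->
        (forall gam : K, inJ1 p sigma gam <-> inEpsDelta p delta gam) /\
        (forall k : nat, inEps p (delta ^+ k) -> (p %| k)%N))).
Proof.
move=> pr _ Hxi Ha0 _ Hap Hgen Hs.
have [Hfix HNs HNc H90] := @facts _ _ _ _ _ _ _ pr Hxi Ha0 Hap Hgen Hs.
set N := galNorm 1 fullv.
have Hxp : xi ^+ p = 1 by apply: prim_expr_order.
have Hp0 : (0 < p)%N by apply: prime_gt0.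
have L1 : forall gam b : K, gam != 0 -> b != 0 -> sigma gam / gam = b ^+ p ->
    exists i : 'I_p, N b = (xi ^+ i)%:A.
  move=> gam b Hg Hb E; apply: root_unity => //.
  have := congr1 N E; rewrite /N galNormX galNormM galNormV HNs -/N => <-.
  by rewrite mulfV // /N galNorm_eq0.
have Hsc : forall f : F, sigma (f%:A) = f%:A by move=> f; apply: gal_scal.
have Hsn0 : forall x : K, x != 0 -> sigma x != 0 by move=> x Hx; rewrite fmorph_eq0.
split.
- move=> HnN gam; split.
  + move=> [Hg [b [Hb E]]].
    have [i Ei] := L1 gam b Hg Hb E.
    have Hi0 : (i : nat) = 0%N.
      have [//|Hi] := eqVneq (i : nat) 0%N; exfalso; apply: HnN.
      have Hcop : coprime i p.
        rewrite coprime_sym prime_coprime //; apply/negP => /dvdn_leq.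
        by rewrite lt0n Hi => /(_ isT); rewrite leqNgt ltn_ord.
      have Hpr : p.-primitive_root (xi ^+ i) by rewrite prim_root_exp_coprime.
      have [j Ej] := prim_rootP Hpr Hxp.
      exists (b ^+ j); split; first by rewrite expf_neq0.
      by rewrite /N galNormX -/N Ei -algA_X -Ej.
    move: Ei; rewrite Hi0 expr0 scale1r => Ei.
    have [c [Hc0 Ec]] := H90 b Hb Ei.
    have Hfx : sigma (gam / c ^+ p) = gam / c ^+ p.
      rewrite fmorph_div rmorphXn /=.
      have Eg : sigma gam = b ^+ p * gam by rewrite -E divfK.
      rewrite Eg Ec; rewrite expr_div_n; field; by rewrite !expf_neq0 ?Hsn0.
    have [f Ef] := Hfix _ Hfx.
    have Hf0 : f != 0.
      apply/eqP=> F0; move: Ef; rewrite F0 scale0r => /eqP.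
      by rewrite mulf_eq0 invr_eq0 expf_eq0 (negbTE Hg) (negbTE Hc0) andbF.
    split=> //; exists f; split=> //; exists c; split=> //.
    rewrite -Ef; field; by rewrite ?expf_neq0 ?Hg.
  + move=> [Hg [f [Hf [c [Hc E]]]]]; split=> //.
    exists (sigma c / c); split; first by rewrite mulf_neq0 ?invr_eq0 ?Hsn0.
    have Eg : gam = f%:A * c ^+ p.
      by rewrite -E mulrC divfK // algA_neq0.
    rewrite Eg rmorphM rmorphXn /= Hsc.
    have Hf' := @algA_neq0 _ K _ Hf.
    rewrite expr_div_n; field; by rewrite Hf' ?expf_neq0 ?Hg.
- move=> [x [Hx0 Nx]]; split.
  + have Nxp : N (x ^+ p) = 1 by rewrite /N galNormX -/N Nx -algA_X Hxp scale1r.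
    have [c [Hc0 Ec]] := H90 _ (expf_neq0 p Hx0) Nxp.
    exists x, c; do !split=> //; by rewrite Ec.
  + move=> lam delta Hl0 Hd0 Nl Ed.
    have Esd : sigma delta = lam ^+ p * delta by rewrite -Ed divfK.
    split.
    * move=> gam; split.
      - move=> [Hg [b [Hb E]]].
        have [i Ei] := L1 gam b Hg Hb E.
        have Hli : lam ^+ i != 0 by rewrite expf_neq0.
        have Nu : N (b / lam ^+ i) = 1.
          rewrite /N galNormM galNormV galNormX -/N Ei Nl -algA_X divff //.
          by rewrite algA_neq0 // expf_neq0 // (prim_root_eq0 Hxi) -lt0n.
        have [c [Hc0 Ec]] := H90 _ (mulf_neq0 Hb (invr_neq0 Hli)) Nu.
        have Eb : b = lam ^+ i * (sigma c / c).
          by rewrite -Ec mulrC divfK.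
        have Eg : sigma gam = b ^+ p * gam by rewrite -E divfK.
        have Hfx : sigma (gam / (delta ^+ i * c ^+ p)) = gam / (delta ^+ i * c ^+ p).
          rewrite fmorph_div rmorphM !rmorphXn /= Eg Esd Eb.
          rewrite !exprMn ?exprVn -!exprM mulnC.
          field; by rewrite !expf_neq0 // Hsn0.
        have [f Ef] := Hfix _ Hfx.
        have Hf0 : f != 0.
          apply/eqP=> F0; move: Ef; rewrite F0 scale0r => /eqP.
          by rewrite mulf_eq0 invr_eq0 mulf_eq0 !expf_eq0 (negbTE Hg) (negbTE Hc0) (negbTE Hd0) !andbF.
        split=> //; exists i; split; first exact: ltn_ord.
        exists f; split=> //; exists c; split=> //.
        rewrite -Ef; field; by rewrite ?expf_neq0 ?Hg ?Hd0 ?Hc0.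
      - move=> [Hg [k [_ [f [Hf [c [Hc E]]]]]]]; split=> //.
        exists (lam ^+ k * (sigma c / c)).
        split; first by rewrite mulf_neq0 ?expf_neq0 // mulf_neq0 ?invr_eq0 // Hsn0.
        have Hf' := @algA_neq0 _ K _ Hf.
        have Eg : gam = f%:A * delta ^+ k * c ^+ p.
          by rewrite -E mulrC divfK // mulf_neq0 // expf_neq0.
        rewrite Eg !rmorphM !rmorphXn /= Hsc Esd.
        rewrite !exprMn ?exprVn -!exprM mulnC.
        field; by rewrite Hf' !expf_neq0 // Hsn0.
    * move=> k [Hdk [f [Hf [c [Hc E]]]]].
      have Hf' := @algA_neq0 _ K _ Hf.
      have Edk : delta ^+ k = f%:A * c ^+ p by rewrite -E mulrC divfK.
      have Hz : (lam ^+ k * c / sigma c) ^+ p = 1.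
        have H1 : sigma (delta ^+ k) = f%:A * sigma c ^+ p.
          by rewrite Edk rmorphM rmorphXn /= Hsc.
        move: H1; rewrite rmorphXn /= Esd exprMn Edk -exprM mulnC exprM => H1.
        have H2 : lam ^+ k ^+ p = f%:A * sigma c ^+ p / (f%:A * c ^+ p).
          by rewrite -H1 mulfK // mulf_neq0 // expf_neq0.
        rewrite !exprMn ?exprVn H2.
        field; by rewrite Hf' !expf_neq0 // Hsn0.
      have [j Ej] := @root_unity _ _ _ _ _ Hxi Hz.
      have := congr1 N Ej; rewrite /N HNc -exprM mulnC exprM Hxp expr1n scale1r.
      rewrite galNormM galNormV HNs galNormM galNormX -/N Nl mulfK; last first.
        by rewrite /N galNorm_eq0.
      rewrite -algA_X => H.
      have : ((xi ^+ k)%:A : K) = (1 : F)%:A by rewrite scale1r.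
      move=> /algA_inj/eqP.
      by rewrite -(prim_order_dvd Hxi).
Qed.
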